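(* Let $t$ be a positive integer. The map sending a partition to its $V_{2t+2,t}$-coding is injective on $\mathcal{DD}_{(2t+2)}$, and the map sending a partition to its $V_{2t,t}$-coding is injective on $\mathcal{SC}_{(2t)}$; that is, each element of $\mathcal{DD}_{(2t+2)}$ (respectively $\mathcal{SC}_{(2t)}$) is in bijective correspondence with its $V_{g,t}$-coding, where $g=2t+2$ (respectively $g=2t$).
   Context: A partition $\lambda=(\lambda_1\geq\lambda_2\geq\dots)$ (with $\lambda_i=0$ for $i>\ell(\lambda)$) has Ferrers diagram consisting of boxes $(i,j)$ with $1\leq j\leq\lambda_i$; $\lambda'$ is the conjugate partition. The hook length of a box $(i,j)$ is $\lambda_i-j+\lambda'_j-i+1$. The Durfee size is $d_\lambda=\max\{s:\lambda_s\geq s\}$. A partition is a $k$-core if none of its hook lengths is divisible by $k$. $\mathcal{DD}$ is the set of partitions $\lambda$ with $\lambda_i=\lambda'_i+1$ for all $1\leq i\leq d_\lambda$; $\mathcal{SC}$ is the set of self-conjugate partitions ($\lambda=\lambda'$); $\mathcal{DD}_{(k)}$, $\mathcal{SC}_{(k)}$ denote their subsets of $k$-cores. $V_{g,t}$-coding (for integers $1\leq t\leq g$): for a partition $\lambda$ and each residue $r\in\{0,\dots,g-1\}$, let $\beta_r=g+\max\{\lambda_j-j: j\geq 1,\ \lambda_j-j\equiv r \pmod g\}$ ($j$ ranging over all positive integers, $\lambda_j=0$ for $j>\ell(\lambda)$). These are distinct; list them decreasingly $\beta_{\sigma(1)}>\dots>\beta_{\sigma(g)}$. The $V_{g,t}$-coding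 of $\lambda$ is $(v_1,\dots,v_t)=(\beta_{\sigma(1)},\dots,\beta_{\sigma(t)})\in\mathbb{Z}^t$. *)

(* Defs.v *)
From mathcomp Require Import all_boot all_order all_algebra.
From mathcomp Require Import intdiv.
Set Implicit Arguments. Unset Strict Implicit. Unset Printing Implicit Defensive.
Import Order.TTheory GRing.Theory Num.Theory.

Definition is_part (l : seq nat) : bool := sorted geq l && (0 \notin l).

(* lambda_i, 1-indexed, with lambda_i = 0 for i > length. *)
Definition lam (l : seq nat) (i : nat) : nat := nth 0 l i.-1.

Definition conjp (l : seq nat) : seq nat :=
  mkseq (fun j => count (fun x => j.+1 <= x) l) (head 0 l).

Definition hook (l : seq nat) (i j : nat) : nat :=
  (lam l i - j) + (lam (conjp l) j - i) + 1.

Definition is_core (k : nat) (l : seq nat) : bool :=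
  all (fun i => all (fun j => ~~ (k %| hook l i j)) (iota 1 (lam l i)))
      (iota 1 (size l)).

Definition durfee (l : seq nat) : nat :=
  \max_(1 <= s < (size l).+1 | s <= lam l s) s.

Definition inDD (l : seq nat) : Prop :=
  forall i, 1 <= i <= durfee l -> lam l i = lam (conjp l) i + 1.

Definition inSC (l : seq nat) : Prop := l = conjp l.

Definition IsMaxOf (P : int -> Prop) (m : int) : Prop :=
  P m /\ forall x, P x -> (x <= m)%R.

Definition IsBeta (g : nat) (l : seq nat) (r : nat) (b : int) : Prop :=
  IsMaxOf (fun x => exists2 j : nat, 1 <= j &
             x = ((lam l j)%:Z - j%:Z)%R /\ ((x - r%:Z)%R \in dvdz g%:Z))
          (b - g%:Z)%R.

Definition VCoding (g t : nat) (l : seq nat) (v : seq int) : Prop :=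
  exists beta : nat -> int,
    (forall r, r < g -> IsBeta g l r (beta r)) /\
    v = take t (sort (fun a b : int => (b <= a)%R) [seq beta r | r <- iota 0 g]).

(* Main.v *)
Require Import Defs.
From mathcomp Require Import all_boot all_order all_algebra.
From mathcomp Require Import zify ring intdiv.
From Stdlib Require Classical_Prop.
Set Implicit Arguments. Unset Strict Implicit. Unset Printing Implicit Defensive.
Import Order.TTheory GRing.Theory Num.Theory.

Definition aa (l : seq nat) (j : nat) : int := ((lam l j)%:Z - j%:Z)%R.
Definition inS l (x : int) := exists2 j : nat, 1 <= j & x = aa l j.
Definition cnt (l : seq nat) (j : nat) := count (fun x => j <= x) l.

Lemma part_cons y l : is_part (y :: l) -> is_part l /\ 0 < y /\ all (fun z => z <= y) l.
Proof.
rewrite /is_part /= in_cons negb_or => /andP[Hs /andP[Hy H0]].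
split; first by rewrite H0 (path_sorted Hs).
split; first by rewrite lt0n eq_sym.
have Ht : transitive geq by move=> a b c H1 H2; apply: leq_trans H2 H1.
have := order_path_min Ht Hs.
by apply: sub_all => z.
Qed.

Lemma lam_cons y l i : lam (y :: l) i.+2 = lam l i.+1.
Proof. by []. Qed.

Lemma lam_mono l i j : is_part l -> i <= j -> lam l j <= lam l i.
Proof.
elim: l i j => [|y l IH] i j Hp Hij; first by rewrite /lam !nth_nil.
have [Hl [Hy Hall]] := part_cons Hp.
case: i Hij => [|[|i]] Hij; case: j Hij => [|[|j]] Hij //=.
- rewrite /lam /=. have: nth 0 l j <= y.
    case: (ltnP j (size l)) => Hj; last by rewrite nth_default.
    by move/allP: Hall; apply; rewrite mem_nth.
  by [].
- rewrite /lam /=. have: nth 0 l j <= y.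
    case: (ltnP j (size l)) => Hj; last by rewrite nth_default.
    by move/allP: Hall; apply; rewrite mem_nth.
  by [].
- by rewrite !lam_cons; apply: IH.
Qed.

Lemma lam_big l j : size l < j -> lam l j = 0.
Proof. move=> H; rewrite /lam nth_default //; lia. Qed.

Lemma lam_pos l j : is_part l -> 1 <= j <= size l -> 0 < lam l j.
Proof.
move=> /andP[_ H0] /andP[H1 H2]; rewrite /lam lt0n.
apply/eqP => E; move: H0; rewrite -E mem_nth //.
by case: j H1 H2 {E}.
Qed.

Lemma all_le_head l x : is_part l -> x \in l -> x <= head 0 l.
Proof.
case: l => [|y l] //= Hp; have [_ [_ Hall]] := part_cons Hp.
by rewrite in_cons => /orP[/eqP->//|]; move/allP: Hall; apply.
Qed.

Lemma conj_cnt l j : is_part l -> 1 <= j -> lam (conjp l) j = cnt l j.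
Proof.
move=> Hp Hj; rewrite /lam /conjp.
case: (ltnP j.-1 (head 0 l)) => H.
  by rewrite nth_mkseq // prednK.
rewrite nth_default ?size_mkseq //.
apply/esym/eqP; rewrite -leqn0 leqNgt -has_count; apply/hasP => -[x Hx Hjx].
have := all_le_head Hp Hx; lia.
Qed.

Lemma galois l i j : is_part l -> 1 <= i -> 1 <= j -> (i <= cnt l j) = (j <= lam l i).
Proof.
elim: l i => [|y l IH] i Hp Hi Hj.
  by rewrite /cnt /lam /= nth_nil; lia.
have [Hl [Hy Hall]] := part_cons Hp.
rewrite /cnt /=.
case: i Hi => [|[|i]] Hi //.
  rewrite /lam /=. case: (leqP j y) => Hjy; first by rewrite add1n.
  rewrite add0n; apply/negbTE; rewrite -ltnNge ltnS leqn0 -/(cnt l j).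
  rewrite /cnt -(count_pred0 l); apply/eqP; apply: eq_in_count => z Hz /=.
  move/allP: Hall => /(_ z Hz); lia.
rewrite lam_cons.
case: (leqP j y) => Hjy.
  by rewrite add1n ltnS -/(cnt l j) IH.
rewrite add0n.
have -> : count (fun x => j <= x) l = 0.
  rewrite -(count_pred0 l); apply: eq_in_count => z Hz /=.
  move/allP: Hall => /(_ z Hz); lia.
have : lam l i.+1 <= y.
  rewrite /lam /=; case: (ltnP i (size l)) => Hj'; last by rewrite nth_default.
  by move/allP: Hall; apply; rewrite mem_nth.
lia.
Qed.

Lemma aa_dec l i j : is_part l -> i < j -> (aa l j < aa l i)%R.
Proof. move=> Hp Hij; have := lam_mono Hp (ltnW Hij); rewrite /aa; lia. Qed.

Lemma aa_big l j : size l < j -> aa l j = (- (Posz j))%R.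
Proof. by move=> H; rewrite /aa lam_big // sub0r. Qed.

Lemma gap l x : is_part l -> ~ inS l x ->
  exists k, (k = 0 \/ (x < aa l k)%R) /\ (aa l k.+1 < x)%R.
Proof.
move=> Hp HS.
pose P := fun m => (0 < m) && (aa l m < x)%R.
have HP : exists m, P m.
  exists (size l + `|x|%N).+1; rewrite /P aa_big /=; lia.
case: (ex_minnP HP) => m /andP[Hm Hmx] Hmin.
exists m.-1; rewrite prednK //; split => //.
case E: m.-1 => [|k]; [by left|right].
have Hk : aa l k.+1 != x.
  by apply/eqP => Ex; apply: HS; exists k.+1.
have : ~~ P k.+1.
  apply/negP => /Hmin; lia.
rewrite /P /= -leNgt le_eqVlt eq_sym (negbTE Hk) /=.
done.
Qed.

Lemma gap_cnt l x k : is_part l -> (k = 0 \/ (x < aa l k)%R) -> (aa l k.+1 < x)%R ->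
  (0 < x + (Posz k) + 1)%R /\ cnt l `|(x + (Posz k) + 1)%R|%N = k.
Proof.
move=> Hp H1 H2.
have Hlow : (0 < x + (Posz k) + 1)%R by move: H2; rewrite /aa; lia.
split => //.
set n := `|(x + (Posz k) + 1)%R|%N.
have Hn : (Posz n) = (x + (Posz k) + 1)%R by rewrite /n gez0_abs //; lia.
have Hn1 : 1 <= n by lia.
apply/eqP; rewrite eqn_leq; apply/andP; split.
  rewrite leqNgt; apply/negP => H.
  have := galois Hp (isT : 1 <= k.+1) Hn1; rewrite H => /esym Hle.
  move: H2; rewrite /aa; lia.
case: (posnP k) => [->//|Hk0].
case: H1 => [Ek|H1]; first lia.
rewrite galois //. move: H1; rewrite /aa; lia.
Qed.

Lemma C1 l i j : is_part l -> 1 <= i -> 1 <= j ->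
  (aa l i + (Posz (cnt l j)) - (Posz j) + 1 != 0)%R.
Proof.
move=> Hp Hi Hj; have := galois Hp Hi Hj.
rewrite /aa; case: (leqP j (lam l i)) => H1 H2.
  lia.
have H3 : (i <= cnt l j) = false by rewrite H2; apply/negbTE; lia.
move/negbT: H3; rewrite -ltnNge => H3. lia.
Qed.

Lemma C2 l x : is_part l -> ~ inS l x -> exists2 j, 1 <= j & x = ((Posz j) - 1 - (Posz (cnt l j)))%R.
Proof.
move=> Hp HS; have [k [H1 H2]] := gap Hp HS.
have [H3 H4] := gap_cnt Hp H1 H2.
exists `|(x + (Posz k) + 1)%R|%N; first lia.
rewrite H4; lia.
Qed.

Lemma core_closed g l x : is_part l -> 0 < g -> is_core g l -> inS l x -> inS l (x - (Posz g))%R.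
Proof.
move=> Hp Hg Hc [i Hi Ex].
apply: Classical_Prop.NNPP => HS.
have [k [H1 H2]] := gap Hp HS.
have [H3 H4] := gap_cnt Hp H1 H2.
set n := `|(x - (Posz g) + (Posz k) + 1)%R|%N in H4.
have Hn : (Posz n) = (x - (Posz g) + (Posz k) + 1)%R by rewrite /n gez0_abs //; lia.
have Hik : i <= k.
  rewrite leqNgt; apply/negP => Hki.
  have : (aa l i <= aa l k.+1)%R.
    move: Hki; rewrite leq_eqVlt => /orP[/eqP<-//|Hlt].
    by apply/ltW/aa_dec.
  lia.
case: H1 => [Ek|H1]; first lia.
have Hkl : lam l k <= lam l i := lam_mono Hp Hik.
have Hnl : n <= lam l i by move: H1; rewrite /aa; lia.
have Hil : i <= size l.
  rewrite leqNgt; apply/negP => Hs; move: Hnl; rewrite lam_big //; lia.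
move: Hc; rewrite /is_core => /allP /(_ i).
rewrite mem_iota Hi /= => /(_ ltac:(lia)) /allP /(_ n).
rewrite mem_iota /= => /(_ ltac:(lia)).
rewrite /hook conj_cnt // ?H4; last lia.
have -> : lam l i - n + (k - i) + 1 = g by move: Ex; rewrite /aa; lia.
by rewrite dvdnn.
Qed.

Lemma res_eq (g r s : nat) (x : int) : r < g -> s < g ->
  (x - Posz r)%R \in dvdz (Posz g) -> (x - Posz s)%R \in dvdz (Posz g) -> r = s.
Proof.
move=> Hr Hs /dvdzP[q1 E1] /dvdzP[q2 E2].
have E : (Posz r - Posz s = (q2 - q1) * Posz g)%R by rewrite mulrBl -E1 -E2; ring.
have : (q2 - q1 = 0)%R by nia.
move=> Hq; rewrite Hq mul0r in E; lia.
Qed.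

Lemma iter_closed g l x n : is_part l -> 0 < g -> is_core g l -> inS l x ->
  inS l (x - Posz n * Posz g)%R.
Proof.
move=> Hp Hg Hc; elim: n x => [|n IH] x Hx; first by rewrite mul0r subr0.
have := IH _ (core_closed Hp Hg Hc Hx).
congr inS. rewrite -[n.+1]addn1 PoszD; ring.
Qed.

Section Beta.
Variables (g : nat) (l : seq nat) (r : nat) (b : int).

Lemma beta_mem : IsBeta g l r b -> inS l (b - Posz g)%R.
Proof. by case => -[j Hj [E _]] _; exists j. Qed.

Lemma beta_res : IsBeta g l r b -> (b - Posz r)%R \in dvdz (Posz g).
Proof.
case => -[j Hj [E /dvdzP[q Hq]]] _; apply/dvdzP; exists (q + 1)%R.
by rewrite mulrDl -Hq; ring.
Qed.

Lemma beta_max x : IsBeta g l r b -> inS l x -> (x - Posz r)%R \in dvdz (Posz g) ->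
  (x <= b - Posz g)%R.
Proof. case => _ H [j Hj E] Hd; apply: H; exists j => //. Qed.

Lemma memS_iff x : is_part l -> 0 < g -> is_core g l -> IsBeta g l r b ->
  (x - Posz r)%R \in dvdz (Posz g) -> (inS l x <-> (x <= b - Posz g)%R).
Proof.
move=> Hp Hg Hc Hb Hx; split; first by move=> H; exact: beta_max Hb H Hx.
move=> Hle.
move/dvdzP: (beta_res Hb) => [q1 E1]; move/dvdzP: Hx => [q2 E2].
have E : (b - Posz g - x = (q1 - q2 - 1) * Posz g)%R.
  by rewrite !mulrBl -E1 -E2; ring.
have Hq : (0 <= q1 - q2 - 1)%R by nia.
have := iter_closed `|(q1 - q2 - 1)%R|%N Hp Hg Hc (beta_mem Hb).
congr inS; rewrite gez0_abs //; rewrite -E; ring.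
Qed.

Lemma charac y : is_part l -> 0 < g -> is_core g l -> IsBeta g l r b ->
  inS l y -> ~ inS l (y + Posz g)%R -> (y - Posz r)%R \in dvdz (Posz g) ->
  (b - Posz g = y)%R.
Proof.
move=> Hp Hg Hc Hb Hy Hyg Hd.
have H1 := beta_max Hb Hy Hd.
have Hd' : (y + Posz g - Posz r)%R \in dvdz (Posz g).
  move/dvdzP: Hd => [q E]; apply/dvdzP; exists (q + 1)%R; rewrite mulrDl -E; ring.
have H2 : ~ (y + Posz g <= b - Posz g)%R by move=> H; apply: Hyg; exact: (proj2 (memS_iff Hp Hg Hc Hb Hd') H).
move/dvdzP: (beta_res Hb) => [q1 E1]; move/dvdzP: Hd => [q2 E2].
have E : (b - Posz g - y = (q1 - q2 - 1) * Posz g)%R.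
  by rewrite !mulrBl -E1 -E2; ring.
have : (q1 - q2 - 1 = 0)%R by nia.
move=> Hq; rewrite Hq mul0r in E; lia.
Qed.

End Beta.

Lemma beta_unique g l r b1 b2 : IsBeta g l r b1 -> IsBeta g l r b2 -> b1 = b2.
Proof.
move=> [H1 H1'] [H2 H2']; have := H1' _ H2; have := H2' _ H1; lia.
Qed.

Lemma aa_le l i j : is_part l -> i <= j -> (aa l j <= aa l i)%R.
Proof.
move=> Hp; rewrite leq_eqVlt => /orP[/eqP->//|H]; exact/ltW/aa_dec.
Qed.

Lemma half l1 l2 j : is_part l1 -> is_part l2 ->
  (forall i, 1 <= i < j -> aa l1 i = aa l2 i) -> (forall x, inS l1 x -> inS l2 x) ->
  1 <= j -> (aa l1 j <= aa l2 j)%R.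
Proof.
move=> Hp1 Hp2 Heq HS Hj.
have [j' Hj' E] : inS l2 (aa l1 j) by apply: HS; exists j.
case: (ltnP j' j) => H.
  have := aa_dec Hp1 H; rewrite (Heq j'); first lia. by apply/andP.
by rewrite E; apply: aa_le.
Qed.

Lemma l_of_S l1 l2 : is_part l1 -> is_part l2 -> (forall x, inS l1 x <-> inS l2 x) -> l1 = l2.
Proof.
move=> Hp1 Hp2 HS.
have Ha : forall n j, 1 <= j <= n -> aa l1 j = aa l2 j.
  elim=> [|n IH] j Hj; first lia.
  have Hlt : forall i, 1 <= i < j -> aa l1 i = aa l2 i by move=> i Hi; apply: IH; lia.
  apply/eqP; rewrite eq_le; apply/andP; split.
    apply: half => //; [by move=> x /HS| lia].
  apply: half => //; [by move=> i /Hlt ->|by move=> x /HS|lia].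
have Hl : forall j, 1 <= j -> lam l1 j = lam l2 j.
  move=> j Hj; have := Ha j j; rewrite /aa; lia.
have Hs : size l1 = size l2.
  apply/eqP; rewrite eqn_leq; apply/andP; split; rewrite leqNgt; apply/negP => H.
    have := lam_pos Hp1 (j := (size l2).+1) ltac:(lia); rewrite Hl // lam_big //.
  have := lam_pos Hp2 (j := (size l1).+1) ltac:(lia); rewrite -Hl // lam_big //.
apply: (eq_from_nth (x0 := 0)) => // i _.
exact: (Hl i.+1).
Qed.

Lemma notS_above g l r b : is_part l -> 0 < g -> is_core g l -> IsBeta g l r b -> ~ inS l b.
Proof.
move=> Hp Hg Hc Hb H.
have := proj1 (memS_iff Hp Hg Hc Hb (beta_res Hb)) H; lia.
Qed.

Section SC.
Variables (l : seq nat).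
Hypothesis (Hp : is_part l) (Hsc : inSC l).

Lemma sc_cnt j : 1 <= j -> cnt l j = lam l j.
Proof. move=> Hj; rewrite -conj_cnt // -Hsc //. Qed.

Lemma SC1 x : inS l x -> ~ inS l (-1 - x)%R.
Proof.
move=> [i Hi Ei] [j Hj Ej]; have := C1 Hp Hi Hj.
rewrite sc_cnt //; move: Ej; rewrite Ei /aa; lia.
Qed.

Lemma SC2 x : ~ inS l x -> inS l (-1 - x)%R.
Proof.
move=> /(C2 Hp) [j Hj E]; exists j => //; move: E; rewrite sc_cnt // /aa; lia.
Qed.

Lemma sc_pair t r b b' : r < 2 * t -> is_core (2 * t) l ->
  IsBeta (2 * t) l r b -> IsBeta (2 * t) l (2 * t - 1 - r) b' -> (b + b' = Posz (2 * t) - 1)%R.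
Proof.
move=> Hr Hc Hb Hb'.
have Hg : 0 < 2 * t by lia.
have Hm := beta_mem Hb.
have Hm' := notS_above Hp Hg Hc Hb.
have Hy : inS l (-1 - b)%R.
  have := SC2 Hm'; congr inS.
have Hy' : ~ inS l (-1 - b + Posz (2 * t))%R.
  have := SC1 Hm; congr (~ inS l _); ring.
have Hd : ((-1 - b) - Posz (2 * t - 1 - r))%R \in dvdz (Posz (2 * t)).
  move/dvdzP: (beta_res Hb) => [q E]; apply/dvdzP; exists (- q - 1)%R.
  rewrite mulrBl mulNr -E mul1r. lia.
have := charac Hp Hg Hc Hb' Hy Hy' Hd; lia.
Qed.
End SC.

Lemma durfee_ge l k : is_part l -> 1 <= k -> k <= lam l k -> k <= durfee l.
Proof.
move=> Hp Hk Hkl; rewrite /durfee.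
have Hks : k <= size l.
  rewrite leqNgt; apply/negP => H; move: Hkl; rewrite lam_big //; lia.
apply: (leq_bigmax_seq (F := fun s => s)) => //.
rewrite mem_index_iota; lia.
Qed.

Section DD.
Variables (l : seq nat).
Hypothesis (Hp : is_part l) (Hdd : inDD l).

Lemma dd_lam k : 1 <= k -> k <= lam l k -> lam l k = (cnt l k).+1.
Proof.
move=> Hk Hkl; rewrite Hdd ?conj_cnt ?addn1 //.
by rewrite Hk durfee_ge.
Qed.

Lemma D1' y : (0 <= y)%R -> inS l y -> ~ inS l (- y)%R.
Proof.
move=> Hy [k Hk Ek] [i Hi Ei].
have Hkl : k <= lam l k by move: Ek Hy; rewrite /aa; lia.
have := C1 Hp Hi Hk; have := dd_lam Hk Hkl.
move: Ei Ek; rewrite /aa; lia.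
Qed.

Lemma D1 x : inS l x -> ~ inS l (- x)%R.
Proof.
move=> Hx Hnx; case: (lerP 0 x) => H.
  exact: D1' H Hx Hnx.
apply: (D1' (y := (- x)%R)) => //; first lia.
by rewrite opprK.
Qed.

Lemma D2' y : (0 < y)%R -> ~ inS l y -> ~ inS l (- y)%R -> False.
Proof.
move=> Hy Hny /(C2 Hp) [j Hj E].
have Hc : j <= cnt l j by lia.
have Hjl : j <= lam l j by rewrite -galois.
have := dd_lam Hj Hjl => Hl.
apply: Hny; exists j => //; rewrite /aa; lia.
Qed.

Lemma D2 x : ~ inS l x -> x != 0%R -> inS l (- x)%R.
Proof.
move=> Hx Hx0; apply: Classical_Prop.NNPP => Hnx.
case: (ltrP 0 x) => H.
  exact: D2' H Hx Hnx.
apply: (D2' (y := (- x)%R)); first lia.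
  exact: Hnx.
by rewrite opprK.
Qed.

Variable t : nat.
Hypothesis (Hc : is_core (2 * t + 2) l).
Let g := 2 * t + 2.
Let Hg : 0 < g. Proof. rewrite /g; lia. Qed.

Lemma dd_b0 b : IsBeta g l 0 b -> b = 0%R.
Proof.
move=> Hb.
have H0 : ~ inS l 0%R by move=> H; apply: (D1 H); rewrite oppr0.
have Hg' : ~ inS l (Posz g).
  move=> H; apply: H0; have := core_closed Hp Hg Hc H; congr inS; ring.
have Hy : inS l (- Posz g)%R by apply: D2 => //; rewrite /g; lia.
have Hy' : ~ inS l (- Posz g + Posz g)%R by rewrite addNr.
have Hd : (- Posz g - Posz 0)%R \in dvdz (Posz g).
  apply/dvdzP; exists (-1)%R; ring.
have := charac Hp Hg Hc Hb Hy Hy' Hd; lia.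
Qed.

Lemma dd_bmid b : IsBeta g l t.+1 b -> b = Posz t.+1.
Proof.
move=> Hb.
have Ht : ~ inS l (Posz t.+1).
  move=> H; apply: (D1 H); have := core_closed Hp Hg Hc H; congr inS; rewrite /g; lia.
have Hy : inS l (- Posz t.+1)%R by apply: D2 => //; lia.
have Hy' : ~ inS l (- Posz t.+1 + Posz g)%R.
  by move=> H; apply: Ht; move: H; congr inS; rewrite /g; lia.
have Hd : (- Posz t.+1 - Posz t.+1)%R \in dvdz (Posz g).
  apply/dvdzP; exists (-1)%R; rewrite /g; lia.
have := charac Hp Hg Hc Hb Hy Hy' Hd; rewrite /g; lia.
Qed.

Lemma dd_pair r b b' : 0 < r < g ->
  IsBeta g l r b -> IsBeta g l (g - r) b' -> (b + b' = Posz g)%R.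
Proof.
move=> Hr Hb Hb'.
have Hm := beta_mem Hb.
have Hm' := notS_above Hp Hg Hc Hb.
have Hb0 : b != 0%R.
  apply/eqP => E; have := beta_res Hb; rewrite E => Hd.
  have Hd0 : (0 - Posz 0)%R \in dvdz (Posz g) by rewrite subr0 dvdz0.
  have := res_eq (ltac:(lia) : r < g) Hg Hd Hd0; lia.
have Hy := D2 Hm' Hb0.
have Hy' : ~ inS l (- b + Posz g)%R.
  have := D1 Hm; congr (~ inS l _); ring.
have Hd : (- b - Posz (g - r))%R \in dvdz (Posz g).
  move/dvdzP: (beta_res Hb) => [q E]; apply/dvdzP; exists (- q - 1)%R.
  rewrite mulrBl mulNr -E mul1r. lia.
have := charac Hp Hg Hc Hb' Hy Hy' Hd; lia.
Qed.
End DD.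

Lemma count_pairs (P : pred nat) n : forall a m,
  (forall i, i < n -> P (a + i) + P (a + 2 * n + m - 1 - i) = 1) ->
  count P (iota a (2 * n + m)) = n + count P (iota (a + n) m).
Proof.
elim: n => [|n IH] a m H; first by rewrite addn0 add0n.
have -> : 2 * n.+1 + m = 1 + ((2 * n + m) + 1) by lia.
rewrite iotaD iotaD !count_cat IH; last first.
  move=> i Hi; have := H i.+1 ltac:(lia).
  have -> : a + i.+1 = a + 1 + i by lia.
  have -> : a + 2 * n.+1 + m - 1 - i.+1 = a + 1 + 2 * n + m - 1 - i by lia.
  done.
have := H 0 ltac:(lia); rewrite addn0.
have -> : a + 2 * n.+1 + m - 1 - 0 = a + 1 + (2 * n + m) by lia.
have -> : a + 1 + n = a + n.+1 by lia.
rewrite /= !addn0. lia.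
Qed.

Definition geR := (fun a b : int => (b <= a)%R).

Lemma take_filter (c : int) (s : seq int) : sorted geR s ->
  take (count (fun x => c <= x)%R s) s = filter (fun x => c <= x)%R s.
Proof.
elim: s => [|y s IH] //= Hs.
have Hs' := path_sorted Hs.
case: (lerP c y) => Hy /=.
  by rewrite IH.
have Ht : transitive geR by move=> a b d H1 H2; rewrite /geR; apply: le_trans H2 H1.
have Hall := order_path_min Ht Hs.
have -> : filter (fun x => c <= x)%R s = [::].
  apply/eqP; rewrite -(negbK (_ == _)) -has_filter; apply/hasP => -[z Hz Hcz].
  move/allP: Hall => /(_ z Hz); rewrite /geR; lia.
have -> : count (fun x => c <= x)%R s = 0.
  apply/eqP; rewrite -leqn0 leqNgt -has_count; apply/hasP => -[z Hz Hcz].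
  move/allP: Hall => /(_ z Hz); rewrite /geR; lia.
by [].
Qed.

Lemma top_mem (b : nat -> int) (g t : nat) (c x : int) :
  count (fun x => c <= x)%R (map b (iota 0 g)) = t ->
  (x \in take t (sort geR (map b (iota 0 g)))) ->
  (exists2 s, s < g & x = b s) /\ (c <= x)%R.
Proof.
move=> Hcnt.
set L := map b (iota 0 g).
have Htot : total geR by move=> a d; rewrite /geR; apply: le_total.
have Hperm : perm_eq (sort geR L) L by rewrite perm_sort.
have Hc : count (fun x => c <= x)%R (sort geR L) = t.
  by rewrite (permP Hperm).
rewrite -Hc take_filter ?sort_sorted // mem_filter mem_sort => /andP[Hcx HxL].
split => //; move/mapP: HxL => [s Hs ->]; exists s => //; move: Hs; rewrite mem_iota; lia.
Qed.

Lemma top_in (b : nat -> int) (g t : nat) (c : int) s :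
  count (fun x => c <= x)%R (map b (iota 0 g)) = t -> s < g -> (c <= b s)%R ->
  b s \in take t (sort geR (map b (iota 0 g))).
Proof.
move=> Hcnt Hs Hcs.
set L := map b (iota 0 g).
have Htot : total geR by move=> a d; rewrite /geR; apply: le_total.
have Hperm : perm_eq (sort geR L) L by rewrite perm_sort.
have Hc : count (fun x => c <= x)%R (sort geR L) = t.
  by rewrite (permP Hperm).
rewrite -Hc take_filter ?sort_sorted // mem_filter mem_sort Hcs /=.
by apply: map_f; rewrite mem_iota; lia.
Qed.

Lemma from_top (b1 b2 : nat -> int) (g t : nat) (c : int) r :
  (forall s, s < g -> (b1 s - Posz s)%R \in dvdz (Posz g)) ->
  (forall s, s < g -> (b2 s - Posz s)%R \in dvdz (Posz g)) ->
  count (fun x => c <= x)%R (map b1 (iota 0 g)) = t ->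
  count (fun x => c <= x)%R (map b2 (iota 0 g)) = t ->
  take t (sort geR (map b1 (iota 0 g))) = take t (sort geR (map b2 (iota 0 g))) ->
  r < g -> (c <= b2 r)%R -> b2 r = b1 r.
Proof.
move=> H1 H2 C1 C2 E Hr Hc.
have := top_in C2 Hr Hc; rewrite -E => /(top_mem C1) [[s Hs Es] _].
have Hrs : r = s.
  apply: (res_eq Hr Hs (H2 r Hr)); rewrite Es; exact: H1.
by rewrite Es Hrs.
Qed.

Lemma S_eq g l1 l2 (b1 b2 : nat -> int) : 0 < g -> is_part l1 -> is_part l2 ->
  is_core g l1 -> is_core g l2 ->
  (forall r, r < g -> IsBeta g l1 r (b1 r)) -> (forall r, r < g -> IsBeta g l2 r (b2 r)) ->
  (forall r, r < g -> b1 r = b2 r) -> l1 = l2.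
Proof.
move=> Hg Hp1 Hp2 Hc1 Hc2 HB1 HB2 E; apply: l_of_S => // x.
have Hg0 : (Posz g != 0)%R by lia.
have Hm0 := modz_ge0 x Hg0.
have Hmg : ((x %% Posz g)%Z < Posz g)%R by apply: ltz_pmod; lia.
set r := `|(x %% Posz g)%Z|%N.
have Hr : Posz r = (x %% Posz g)%Z by rewrite /r gez0_abs.
have Hrg : r < g by lia.
have Hd : (x - Posz r)%R \in dvdz (Posz g).
  apply/dvdzP; exists (x %/ Posz g)%Z; rewrite Hr {1}(divz_eq x (Posz g)); ring.
rewrite (memS_iff Hp1 Hg Hc1 (HB1 r Hrg) Hd) (memS_iff Hp2 Hg Hc2 (HB2 r Hrg) Hd) E //.
Qed.

Lemma SC_main t l1 l2 v : 0 < t -> is_part l1 -> is_part l2 -> inSC l1 -> inSC l2 ->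
  is_core (2 * t) l1 -> is_core (2 * t) l2 ->
  VCoding (2 * t) t l1 v -> VCoding (2 * t) t l2 v -> l1 = l2.
Proof.
move=> Ht Hp1 Hp2 Hs1 Hs2 Hc1 Hc2 [b1 [HB1 Ev1]] [b2 [HB2 Ev2]].
have Hg : 0 < 2 * t by lia.
have Pair : forall l b, is_part l -> inSC l -> is_core (2 * t) l ->
    (forall r, r < 2 * t -> IsBeta (2 * t) l r (b r)) ->
    forall r, r < 2 * t -> (b r + b (2 * t - 1 - r)%N = Posz (2 * t)%N - 1)%R.
  move=> l b Hp Hs Hc HB r Hr; apply: (sc_pair Hp Hs Hr Hc (HB r Hr) (HB _ _)); lia.
have Cnt : forall l b, is_part l -> inSC l -> is_core (2 * t) l ->
    (forall r, r < 2 * t -> IsBeta (2 * t) l r (b r)) ->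
    count (fun x => Posz t <= x)%R (map b (iota 0 (2 * t))) = t.
  move=> l b Hp Hs Hc HB; rewrite count_map.
  have := count_pairs (P := (fun s => Posz t <= b s)%R) (a := 0) (m := 0) (n := t).
  rewrite addn0 /= addn0 => -> //.
  move=> i Hi; rewrite add0n.
  have := Pair l b Hp Hs Hc HB i ltac:(lia).
  have -> : 2 * t - 1 - i = 0 + 2 * t + 0 - 1 - i by lia.
  by case: (lerP (Posz t) (b i)); case: (lerP (Posz t) (b (0 + 2 * t + 0 - 1 - i))); lia.
have Res1 : forall s, s < 2 * t -> (b1 s - Posz s)%R \in dvdz (Posz (2 * t)).
  by move=> s Hs; apply: beta_res (HB1 s Hs).
have Res2 : forall s, s < 2 * t -> (b2 s - Posz s)%R \in dvdz (Posz (2 * t)).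
  by move=> s Hs; apply: beta_res (HB2 s Hs).
have C1 := Cnt l1 b1 Hp1 Hs1 Hc1 HB1.
have C2 := Cnt l2 b2 Hp2 Hs2 Hc2 HB2.
have E : take t (sort geR (map b1 (iota 0 (2 * t)))) = take t (sort geR (map b2 (iota 0 (2 * t)))).
  by rewrite -Ev1 -Ev2.
have FT := from_top Res1 Res2 C1 C2 E.
apply: (S_eq Hg Hp1 Hp2 Hc1 Hc2 HB1 HB2) => r Hr.
case: (lerP (Posz t) (b2 r)) => H; first by rewrite (FT r).
have Hr' : 2 * t - 1 - r < 2 * t by lia.
have P1 := Pair l1 b1 Hp1 Hs1 Hc1 HB1 r Hr.
have P2 := Pair l2 b2 Hp2 Hs2 Hc2 HB2 r Hr.
have := FT _ Hr' ltac:(lia). lia.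
Qed.

Lemma DD_main t l1 l2 v : 0 < t -> is_part l1 -> is_part l2 -> inDD l1 -> inDD l2 ->
  is_core (2 * t + 2) l1 -> is_core (2 * t + 2) l2 ->
  VCoding (2 * t + 2) t l1 v -> VCoding (2 * t + 2) t l2 v -> l1 = l2.
Proof.
move=> Ht Hp1 Hp2 Hs1 Hs2 Hc1 Hc2 [b1 [HB1 Ev1]] [b2 [HB2 Ev2]].
have Hg : 0 < 2 * t + 2 by lia.
have Pair : forall l b, is_part l -> inDD l -> is_core (2 * t + 2) l ->
    (forall r, r < 2 * t + 2 -> IsBeta (2 * t + 2) l r (b r)) ->
    forall r, 0 < r < 2 * t + 2 -> (b r + b (2 * t + 2 - r)%N = Posz (2 * t + 2)%N)%R.
  move=> l b Hp Hs Hc HB r Hr; apply: (dd_pair Hp Hs Hc Hr (HB r _) (HB _ _)); lia.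
have Mid : forall l b, (forall r, r < 2 * t + 2 -> IsBeta (2 * t + 2) l r (b r)) ->
    forall r, r < 2 * t + 2 -> r != t.+1 -> b r != Posz t.+1.
  move=> l b HB r Hr Hne; apply/eqP => Eb.
  have := beta_res (HB r Hr); rewrite Eb => Hd.
  have Hd' : (Posz t.+1 - Posz t.+1)%R \in dvdz (Posz (2 * t + 2)) by rewrite subrr dvdz0.
  have := res_eq Hr (ltac:(lia) : t.+1 < 2 * t + 2) Hd Hd'; lia.
have Cnt : forall l b, is_part l -> inDD l -> is_core (2 * t + 2) l ->
    (forall r, r < 2 * t + 2 -> IsBeta (2 * t + 2) l r (b r)) ->
    count (fun x => Posz t + 2 <= x)%R (map b (iota 0 (2 * t + 2))) = t.
  move=> l b Hp Hs Hc HB; rewrite count_map.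
  have -> : 2 * t + 2 = 1 + (2 * t + 1) by lia.
  rewrite iotaD count_cat.
  have := count_pairs (P := (fun s => Posz t + 2 <= b s)%R) (a := 1) (m := 1) (n := t).
  rewrite add0n => -> //=.
    rewrite (dd_b0 Hp Hs Hc (HB 0 ltac:(lia))).
    have -> : 1 + t = t.+1 by lia.
    rewrite (dd_bmid Hp Hs Hc (HB t.+1 ltac:(lia))).
    by case: (lerP (Posz t + 2) 0); case: (lerP (Posz t + 2) (Posz t.+1)); lia.
  move=> i Hi.
  have := Pair l b Hp Hs Hc HB (1 + i) ltac:(lia).
  have -> : 2 * t + 2 - (1 + i) = 1 + 2 * t + 1 - 1 - i by lia.
  have := Mid l b HB (1 + i) ltac:(lia) ltac:(lia).
  have := Mid l b HB (1 + 2 * t + 1 - 1 - i) ltac:(lia) ltac:(lia).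
  by case: (lerP (Posz t + 2) (b (1 + i))); case: (lerP (Posz t + 2) (b (1 + 2 * t + 1 - 1 - i))); lia.
have Res1 : forall s, s < 2 * t + 2 -> (b1 s - Posz s)%R \in dvdz (Posz (2 * t + 2)).
  by move=> s Hs; apply: beta_res (HB1 s Hs).
have Res2 : forall s, s < 2 * t + 2 -> (b2 s - Posz s)%R \in dvdz (Posz (2 * t + 2)).
  by move=> s Hs; apply: beta_res (HB2 s Hs).
have C1 := Cnt l1 b1 Hp1 Hs1 Hc1 HB1.
have C2 := Cnt l2 b2 Hp2 Hs2 Hc2 HB2.
have E : take t (sort geR (map b1 (iota 0 (2 * t + 2)))) = take t (sort geR (map b2 (iota 0 (2 * t + 2)))).
  by rewrite -Ev1 -Ev2.
have FT := from_top Res1 Res2 C1 C2 E.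
apply: (S_eq Hg Hp1 Hp2 Hc1 Hc2 HB1 HB2) => r Hr.
case: (posnP r) => [->|Hr0].
  by rewrite (dd_b0 Hp1 Hs1 Hc1 (HB1 0 Hg)) (dd_b0 Hp2 Hs2 Hc2 (HB2 0 Hg)).
case: (eqVneq r t.+1) => [->|Hne].
  rewrite (dd_bmid Hp1 Hs1 Hc1 (HB1 t.+1 _)) ?(dd_bmid Hp2 Hs2 Hc2 (HB2 t.+1 _)) //; lia.
case: (lerP (Posz t + 2) (b2 r)) => H; first by rewrite (FT r).
have Hr' : 2 * t + 2 - r < 2 * t + 2 by lia.
have P1 := Pair l1 b1 Hp1 Hs1 Hc1 HB1 r ltac:(lia).
have P2 := Pair l2 b2 Hp2 Hs2 Hc2 HB2 r ltac:(lia).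
have M2 := Mid l2 b2 HB2 r Hr Hne.
have := FT _ Hr' ltac:(lia). lia.
Qed.

Unset Implicit Arguments.
Theorem proposition3p3 (t : nat) (ht : 0 < t) :
  (forall (l1 l2 : seq nat) (v : seq int),
      is_part l1 -> is_part l2 ->
      inDD l1 -> inDD l2 ->
      is_core (2 * t + 2) l1 -> is_core (2 * t + 2) l2 ->
      VCoding (2 * t + 2) t l1 v -> VCoding (2 * t + 2) t l2 v ->
      l1 = l2) /\
  (forall (l1 l2 : seq nat) (v : seq int),
      is_part l1 -> is_part l2 ->
      inSC l1 -> inSC l2 ->
      is_core (2 * t) l1 -> is_core (2 * t) l2 ->
      VCoding (2 * t) t l1 v -> VCoding (2 * t) t l2 v ->
      l1 = l2).
Proof.
split=> l1 l2 v; [exact: DD_main | exact: SC_main].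
Qed.
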